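(* Let $N\ge 1$, let $a\in\mathbb{R}^N$ with $a_i\neq 0$ for all $i$, and let $\underline x,\overline x,\underline y,\overline y\in\mathbb{R}^N$ with $\underline x<\overline x$ and $\underline y<\overline y$ componentwise. Let $$\mathcal{S}_a=\Big\{(x,y)\in\mathbb{R}^N\times\mathbb{R}^N:\ \sum_{i=1}^N a_ix_iy_i=0,\ \underline x\le x\le\overline x,\ \underline y\le y\le\overline y\Big\}.$$ Then $\operatorname{conv}(\mathcal{S}_a)$ is second-order cone representable.
   Context: A set $S\subseteq\mathbb{R}^n$ is second-order cone representable if it is the projection onto the first $n$ coordinates of a set $\{(x,u)\in\mathbb{R}^n\times\mathbb{R}^m\}$ defined by finitely many linear equalities/inequalities and constraints of the form $\|A_k(x,u)+b_k\|_2\le c_k^T(x,u)+d_k$. *)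

(* Defs.v *)
From Stdlib Require Import Reals.
From mathcomp Require Import all_boot.
Set Implicit Arguments. Unset Strict Implicit. Unset Printing Implicit Defensive.
Local Open Scope R_scope.

Definition vec (n : nat) := 'I_n -> R.

Definition rsum (n : nat) (F : 'I_n -> R) : R := \big[Rplus/0]_(i < n) F i.

Definition dotv (n : nat) (u v : vec n) : R := rsum (fun i => u i * v i).

Definition norm2 (n : nat) (v : vec n) : R := sqrt (rsum (fun i => v i * v i)).

(* An affine form in (x,u) in R^n x R^m : (coefficients on x, coefficients on u, constant) *)
Definition affform (n m : nat) := ((vec n * vec m) * R)%type.

Definition eval_aff (n m : nat) (f : affform n m) (x : vec n) (u : vec m) : R :=
  dotv f.1.1 x + dotv f.1.2 u + f.2.

(* Second-order cone representable set S ⊆ R^n: projection onto x of a set of (x,u)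
   defined by finitely many linear equalities, linear inequalities, and
   second-order cone constraints ||A_k(x,u)+b_k||_2 <= c_k^T(x,u)+d_k
   (the affine map A_k(x,u)+b_k : R^n x R^m -> R^(d k) is given row by row). *)
Definition SOC_representable (n : nat) (S : vec n -> Prop) : Prop :=
  exists (m p q r : nat)
         (E : 'I_p -> affform n m)
         (I : 'I_q -> affform n m)
         (d : 'I_r -> nat)
         (A : forall k : 'I_r, 'I_(d k) -> affform n m)
         (c : 'I_r -> affform n m),
    forall x : vec n,
      S x <->
      exists u : vec m,
        (forall j, eval_aff (E j) x u = 0) /\
        (forall j, eval_aff (I j) x u <= 0) /\
        (forall k, norm2 (fun i => eval_aff (A k i) x u) <= eval_aff (c k) x u).

Definition conv (n : nat) (S : vec n -> Prop) : vec n -> Prop :=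
  fun z => exists (k : nat) (lam : 'I_k -> R) (p : 'I_k -> vec n),
    (forall j, 0 <= lam j) /\ rsum lam = 1 /\ (forall j, S (p j)) /\
    (forall i, z i = rsum (fun j => lam j * p j i)).

(* A point of R^N x R^N is stored as a vector of R^(N+N): first block x, second y *)
Definition xpart (N : nat) (z : vec (N + N)) : vec N := fun i => z (lshift N i).
Definition ypart (N : nat) (z : vec (N + N)) : vec N := fun i => z (rshift N i).

Definition S_a (N : nat) (a xl xu yl yu : vec N) : vec (N + N) -> Prop :=
  fun z =>
    rsum (fun i => a i * xpart z i * ypart z i) = 0 /\
    (forall i, xl i <= xpart z i <= xu i) /\
    (forall i, yl i <= ypart z i <= yu i).

(* Main.v *)
Require Import Defs.
From Stdlib Require Import Reals.
From mathcomp Require Import all_boot.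
From HB Require Import structures.
From Stdlib Require Import Lra Psatz Classical FunctionalExtensionality ClassicalEpsilon.
Local Open Scope R_scope.
Set Implicit Arguments. Unset Strict Implicit. Unset Printing Implicit Defensive.

Lemma R0_plus : left_id 0 Rplus. Proof. move=> x; lra. Qed.
Lemma RplusA : associative Rplus. Proof. move=> x y z; lra. Qed.
HB.instance Definition _ := Monoid.isComLaw.Build R 0 Rplus RplusA Rplus_comm R0_plus.
Lemma R0_mull : left_zero 0 Rmult. Proof. move=> x; lra. Qed.
Lemma R0_mulr : right_zero 0 Rmult. Proof. move=> x; lra. Qed.
HB.instance Definition _ := Monoid.isMulLaw.Build R 0 Rmult R0_mull R0_mulr.
Lemma RmulDl : left_distributive Rmult Rplus. Proof. move=> x y z; lra. Qed.
Lemma RmulDr : right_distributive Rmult Rplus. Proof. move=> x y z; lra. Qed.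
HB.instance Definition _ := Monoid.isAddLaw.Build R Rmult Rplus RmulDl RmulDr.

Lemma rsum_add n (F G : 'I_n -> R) : rsum (fun i => F i + G i) = rsum F + rsum G.
Proof. by rewrite /rsum big_split. Qed.
Lemma rsum_scal n c (F : 'I_n -> R) : rsum (fun i => c * F i) = c * rsum F.
Proof. by rewrite /rsum big_distrr. Qed.
Lemma rsum_ext n (F G : 'I_n -> R) : (forall i, F i = G i) -> rsum F = rsum G.
Proof. by move=> H; rewrite /rsum; apply: eq_bigr => i _. Qed.
Lemma rsum0 n : rsum (fun _ : 'I_n => 0) = 0.
Proof. by rewrite /rsum big1. Qed.
Lemma rsum_ord0 (F : 'I_0 -> R) : rsum F = 0.
Proof. by rewrite /rsum big_ord0. Qed.
Lemma rsumS n (F : 'I_n.+1 -> R) : rsum F = rsum (fun i : 'I_n => F (widen_ord (leqnSn n) i)) + F ord_max.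
Proof. by rewrite /rsum big_ord_recr. Qed.
Lemma rsum_split n k (F : 'I_(n + k) -> R) :
  rsum F = rsum (fun i => F (lshift k i)) + rsum (fun j => F (rshift n j)).
Proof. by rewrite /rsum big_split_ord. Qed.
Lemma rsum_pick n (i0 : 'I_n) (F : 'I_n -> R) :
  rsum (fun i => if i == i0 then F i else 0) = F i0.
Proof. rewrite /rsum -big_mkcond /=. by rewrite big_pred1_eq. Qed.
Lemma rsum_D1 n (i0 : 'I_n) (F : 'I_n -> R) :
  rsum F = F i0 + rsum (fun i => if i == i0 then 0 else F i).
Proof.
rewrite /rsum (bigD1 i0) //=; congr (_ + _).
rewrite [in RHS](bigD1 i0) //= eqxx R0_plus; apply: eq_bigr => i /negbTE ->; done.
Qed.
Lemma rsum_ge0 n (F : 'I_n -> R) : (forall i, 0 <= F i) -> 0 <= rsum F.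
Proof.
move=> H; rewrite /rsum; elim/big_ind: _ => //; [lra | move=> x y; lra].
Qed.
Lemma rsum_le n (F G : 'I_n -> R) : (forall i, F i <= G i) -> rsum F <= rsum G.
Proof.
move=> H; rewrite /rsum; elim/big_ind2: _ => //; [lra | move=> x y u v; lra].
Qed.
Lemma rsum_eq0 n (F : 'I_n -> R) : (forall i, 0 <= F i) -> rsum F = 0 -> forall i, F i = 0.
Proof.
move=> H E i; have := rsum_D1 i F; rewrite E => E2.
have H2 : forall j : 'I_n, 0 <= (if j == i then 0 else F j) by move=> j; case: (j == i); [lra | apply: H].
have := rsum_ge0 H2; have := H i; move=> *; lra.
Qed.

Definition vcat n k (x : vec n) (y : vec k) : vec (n + k) :=
  fun c => match split c with inl i => x i | inr j => y j end.
Definition vl n k (v : vec (n + k)) : vec n := fun i => v (lshift k i).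
Definition vr n k (v : vec (n + k)) : vec k := fun j => v (rshift n j).
Lemma vcatL n k (x : vec n) (y : vec k) i : vcat x y (lshift k i) = x i.
Proof. by rewrite /vcat (unsplitK (inl i : 'I_n + 'I_k)). Qed.
Lemma vcatR n k (x : vec n) (y : vec k) j : vcat x y (rshift n j) = y j.
Proof. by rewrite /vcat (unsplitK (inr j : 'I_n + 'I_k)). Qed.
Lemma vcat_eta n k (v : vec (n + k)) : vcat (vl v) (vr v) = v.
Proof.
apply: functional_extensionality => c; rewrite /vcat /vl /vr.
by case: split_ordP => j ->.
Qed.
Lemma vl_vcat n k (x : vec n) (y : vec k) : vl (vcat x y) = x.
Proof. apply: functional_extensionality => i; exact: vcatL. Qed.
Lemma vr_vcat n k (x : vec n) (y : vec k) : vr (vcat x y) = y.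
Proof. apply: functional_extensionality => i; exact: vcatR. Qed.
Lemma dotv_split n k (g x : vec (n + k)) : dotv g x = dotv (vl g) (vl x) + dotv (vr g) (vr x).
Proof. by rewrite /dotv rsum_split. Qed.
Lemma dotv_vcat n k (g x : vec n) (h y : vec k) : dotv (vcat g h) (vcat x y) = dotv g x + dotv h y.
Proof. by rewrite dotv_split !vl_vcat !vr_vcat. Qed.
Lemma dotv0l n (x : vec n) : dotv (fun _ => 0) x = 0.
Proof. rewrite /dotv; transitivity (rsum (fun _ : 'I_n => 0)); [apply: rsum_ext => i; lra | exact: rsum0]. Qed.
Lemma dotv_vec0 (g x : vec 0) : dotv g x = 0.
Proof. exact: rsum_ord0. Qed.
Lemma dotv_addl n (f g x : vec n) : dotv (fun i => f i + g i) x = dotv f x + dotv g x.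
Proof. rewrite /dotv -rsum_add; apply: rsum_ext => i; lra. Qed.
Lemma dotv_scall n c (f x : vec n) : dotv (fun i => c * f i) x = c * dotv f x.
Proof. rewrite /dotv -rsum_scal; apply: rsum_ext => i; lra. Qed.
Lemma dotv_unit n (c0 : 'I_n) (x : vec n) : dotv (fun c => if c == c0 then 1 else 0) x = x c0.
Proof.
rewrite /dotv -(rsum_pick c0 x); apply: rsum_ext => i; case: (i == c0); lra.
Qed.

Definition affine n (L : vec n -> R) := exists f b, forall x, L x = dotv f x + b.
Lemma affine_ext n (L L' : vec n -> R) : (forall x, L x = L' x) -> affine L -> affine L'.
Proof. move=> E [f [b H]]; exists f, b => x; rewrite -E; exact: H. Qed.
Lemma affine_const n b : affine (fun _ : vec n => b).
Proof. exists (fun _ => 0), b => x; rewrite dotv0l; lra. Qed.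
Lemma affine_coord n (c : 'I_n) : affine (fun x : vec n => x c).
Proof. exists (fun i => if i == c then 1 else 0), 0 => x; rewrite dotv_unit; lra. Qed.
Lemma affine_add n (L M : vec n -> R) : affine L -> affine M -> affine (fun x => L x + M x).
Proof.
move=> [f [b H]] [g [e K]]; exists (fun i => f i + g i), (b + e) => x.
rewrite dotv_addl H K; lra.
Qed.
Lemma affine_scal n c (L : vec n -> R) : affine L -> affine (fun x => c * L x).
Proof.
move=> [f [b H]]; exists (fun i => c * f i), (c * b) => x; rewrite dotv_scall H; lra.
Qed.
Lemma affine_sub n (L M : vec n -> R) : affine L -> affine M -> affine (fun x => L x - M x).
Proof.
move=> HL HM; apply: (affine_ext (L := fun x => L x + (-1) * M x)).
  move=> x; lra.
by apply: affine_add => //; apply: affine_scal.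
Qed.
Lemma affine_sum n M (L : 'I_M -> vec n -> R) :
  (forall j, affine (L j)) -> affine (fun x => rsum (fun j => L j x)).
Proof.
elim: M L => [|M IH] L H.
  apply: (affine_ext (L := fun _ => 0)); last exact: affine_const.
  by move=> x; rewrite rsum_ord0.
apply: (affine_ext (L := fun x => rsum (fun j : 'I_M => L (widen_ord (leqnSn M) j) x) + L ord_max x)).
  by move=> x; rewrite rsumS.
apply: affine_add => //; apply: IH => j; exact: H.
Qed.

Definition soc_c n m := ({d : nat & 'I_d -> affform n m} * affform n m)%type.
Record sys n m := Sys { seqs : seq (affform n m); sineqs : seq (affform n m); ssocs : seq (soc_c n m) }.
Definition holds n m (S : sys n m) (x : vec n) (u : vec m) :=
  (forall f, List.In f (seqs S) -> eval_aff f x u = 0) /\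
  (forall f, List.In f (sineqs S) -> eval_aff f x u <= 0) /\
  (forall s, List.In s (ssocs S) -> norm2 (fun i => eval_aff (projT2 s.1 i) x u) <= eval_aff s.2 x u).
Definition SOCr n (P : vec n -> Prop) := exists m (S : sys n m), forall x, P x <-> exists u, holds S x u.

Lemma In_map T U (f : T -> U) (s : seq T) y : List.In y (map f s) <-> exists x, List.In x s /\ f x = y.
Proof.
elim: s => [|z s IH] /=; first by split => // [[x []]].
split.
  case=> [<-|/IH [x [H1 H2]]]; [by exists z; auto | by exists x; auto].
by case=> x [[->|H1] H2]; [left | right; apply/IH; exists x].
Qed.
Lemma In_cat T (s1 s2 : seq T) y : List.In y (s1 ++ s2) <-> List.In y s1 \/ List.In y s2.
Proof. elim: s1 => [|z s IH] /=; [tauto | rewrite IH; tauto]. Qed.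
Lemma allnth T (d0 : T) (s : seq T) (P : T -> Prop) :
  (forall j : 'I_(size s), P (nth d0 s j)) <-> (forall f, List.In f s -> P f).
Proof.
split.
  move=> H f Hf; elim: s Hf H => [|z s IH] //= [<-|Hf] H.
    exact: (H ord0).
  apply: IH => // j; exact: (H (lift ord0 j)).
move=> H [j Hj] /=; apply: H; elim: s j Hj => [|z s IH] [|j] //= Hj.
  by left.
by right; apply: IH.
Qed.
Lemma norm2_ext d (f g : vec d) : (forall i, f i = g i) -> norm2 f = norm2 g.
Proof. move=> H; rewrite /norm2; congr sqrt; apply: rsum_ext => i; by rewrite H. Qed.

Lemma SOCr_SOC n (P : vec n -> Prop) : SOCr P -> SOC_representable P.
Proof.
move=> [m [S H]].
pose f0 : affform n m := ((fun _ => 0, fun _ => 0), 0).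
pose s0 : soc_c n m := (existT _ 0%N (fun _ => f0), f0).
exists m, (size (seqs S)), (size (sineqs S)), (size (ssocs S)),
  (fun j => nth f0 (seqs S) j), (fun j => nth f0 (sineqs S) j),
  (fun k => projT1 (nth s0 (ssocs S) k).1), (fun k => projT2 (nth s0 (ssocs S) k).1),
  (fun k => (nth s0 (ssocs S) k).2) => x.
rewrite H; split; move=> [u [H1 [H2 H3]]]; exists u; split; [|split| |split].
- exact: (proj2 (allnth f0 (seqs S) (fun f => eval_aff f x u = 0)) H1).
- exact: (proj2 (allnth f0 (sineqs S) (fun f => eval_aff f x u <= 0)) H2).
- exact: (proj2 (allnth s0 (ssocs S) (fun s => norm2 (fun i => eval_aff (projT2 s.1 i) x u) <= eval_aff s.2 x u)) H3).
- exact: (proj1 (allnth f0 (seqs S) (fun f => eval_aff f x u = 0)) H1).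
- exact: (proj1 (allnth f0 (sineqs S) (fun f => eval_aff f x u <= 0)) H2).
- exact: (proj1 (allnth s0 (ssocs S) (fun s => norm2 (fun i => eval_aff (projT2 s.1 i) x u) <= eval_aff s.2 x u)) H3).
Qed.

Definition map_soc n m n' m' (tr : affform n m -> affform n' m') (s : soc_c n m) : soc_c n' m' :=
  (existT _ (projT1 s.1) (fun i => tr (projT2 s.1 i)), tr s.2).
Definition map_sys n m n' m' (tr : affform n m -> affform n' m') (S : sys n m) : sys n' m' :=
  Sys (map tr (seqs S)) (map tr (sineqs S)) (map (map_soc tr) (ssocs S)).
Lemma holds_map n m n' m' (tr : affform n m -> affform n' m') S x u x' u' :
  (forall f, eval_aff (tr f) x' u' = eval_aff f x u) ->
  (holds (map_sys tr S) x' u' <-> holds S x u).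
Proof.
move=> E; rewrite /holds /=; split; move=> [H1 [H2 H3]]; split; [|split| |split].
- move=> f Hf; rewrite -E; apply: H1; apply/In_map; by exists f.
- move=> f Hf; rewrite -E; apply: H2; apply/In_map; by exists f.
- move=> s Hs; have := H3 (map_soc tr s); rewrite /= E.
  move=> K; have E2 : norm2 (fun i => eval_aff (tr (projT2 s.1 i)) x' u') = norm2 (fun i => eval_aff (projT2 s.1 i) x u) by apply: norm2_ext => i; rewrite E.
  rewrite E2 in K; apply: K; apply/In_map; by exists s.
- by move=> f /In_map [g [Hg <-]]; rewrite E; apply: H1.
- by move=> f /In_map [g [Hg <-]]; rewrite E; apply: H2.
- move=> s /In_map [t [Ht <-]] /=; rewrite E.
  have E2 : norm2 (fun i => eval_aff (tr (projT2 t.1 i)) x' u') = norm2 (fun i => eval_aff (projT2 t.1 i) x u) by apply: norm2_ext => i; rewrite E.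
  rewrite E2; exact: H3.
Qed.
Definition app_sys n m (S1 S2 : sys n m) : sys n m :=
  Sys (seqs S1 ++ seqs S2) (sineqs S1 ++ sineqs S2) (ssocs S1 ++ ssocs S2).
Lemma holds_app n m (S1 S2 : sys n m) x u : holds (app_sys S1 S2) x u <-> holds S1 x u /\ holds S2 x u.
Proof.
rewrite /holds /=; split.
  move=> [H1 [H2 H3]]; split; split; try split; move=> f Hf;
    [apply: H1|apply: H2|apply: H3|apply: H1|apply: H2|apply: H3]; apply/In_cat; tauto.
move=> [[H1 [H2 H3]] [K1 [K2 K3]]]; split; [|split] => f /In_cat [] ?; auto.
Qed.

Lemma SOCr_ext n (P Q : vec n -> Prop) : (forall x, P x <-> Q x) -> SOCr P -> SOCr Q.
Proof. move=> E [m [S H]]; exists m, S => x; rewrite -E; exact: H. Qed.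

Definition trL n m1 m2 (f : affform n m1) : affform n (m1 + m2) := ((f.1.1, vcat f.1.2 (fun _ => 0)), f.2).
Definition trR n m1 m2 (f : affform n m2) : affform n (m1 + m2) := ((f.1.1, vcat (fun _ => 0) f.1.2), f.2).

Lemma SOCr_and n (P Q : vec n -> Prop) : SOCr P -> SOCr Q -> SOCr (fun x => P x /\ Q x).
Proof.
move=> [m1 [S1 H1]] [m2 [S2 H2]].
exists (m1 + m2)%N, (app_sys (map_sys (@trL n m1 m2) S1) (map_sys (@trR n m1 m2) S2)) => x.
rewrite H1 H2; split.
  move=> [[u1 K1] [u2 K2]]; exists (vcat u1 u2); apply/holds_app; split.
    apply/(holds_map _ (x := x) (u := u1)) => // f.
    by rewrite /eval_aff /trL /= dotv_vcat dotv0l; lra.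
  apply/(holds_map _ (x := x) (u := u2)) => // f.
  by rewrite /eval_aff /trR /= dotv_vcat dotv0l; lra.
move=> [u /holds_app [K1 K2]]; split.
  exists (vl u); apply/(@holds_map _ _ _ _ (@trL n m1 m2) S1 x (vl u) x u) => // f.
  by rewrite /eval_aff /trL /= (dotv_split (vcat _ _)) vl_vcat vr_vcat dotv0l; lra.
exists (vr u); apply/(@holds_map _ _ _ _ (@trR n m1 m2) S2 x (vr u) x u) => // f.
by rewrite /eval_aff /trR /= (dotv_split (vcat _ _)) vl_vcat vr_vcat dotv0l; lra.
Qed.

Definition trE n k m (f : affform (n + k) m) : affform n (k + m) :=
  ((vl f.1.1, vcat (vr f.1.1) f.1.2), f.2).
Lemma SOCr_ex n k (P : vec (n + k) -> Prop) : SOCr P -> SOCr (fun x => exists y, P (vcat x y)).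
Proof.
move=> [m [S H]]; exists (k + m)%N, (map_sys (@trE n k m) S) => x; split.
  move=> [y /H [u Hu]]; exists (vcat y u).
  apply/(@holds_map _ _ _ _ (@trE n k m) S (vcat x y) u x (vcat y u)) => // f.
  rewrite /eval_aff /trE /= dotv_vcat (dotv_split f.1.1) vl_vcat vr_vcat; lra.
move=> [v Hv]; exists (vl v); apply/H; exists (vr v).
apply/(@holds_map _ _ _ _ (@trE n k m) S (vcat x (vl v)) (vr v) x v) => // f.
rewrite /eval_aff /trE /= (dotv_split (vcat _ _) v) vl_vcat vr_vcat (dotv_split f.1.1) vl_vcat vr_vcat; lra.
Qed.

Lemma fin_choice T (M : nat) (P : 'I_M -> T -> Prop) : (forall j, exists t, P j t) -> exists F : 'I_M -> T, forall j, P j (F j).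
Proof.
move=> H; exists (fun j => proj1_sig (constructive_indefinite_description _ (H j))) => j.
exact: proj2_sig (constructive_indefinite_description _ (H j)).
Qed.

Definition trP n k m (F : 'I_k -> vec n) (g : vec k) (f : affform k m) : affform n m :=
  ((fun i => rsum (fun j => f.1.1 j * F j i), f.1.2), f.2 + rsum (fun j => f.1.1 j * g j)).
Lemma dotv_comp n k (h : vec k) (F : 'I_k -> vec n) (g : vec k) (x : vec n) :
  dotv h (fun j => dotv (F j) x + g j) = dotv (fun i => rsum (fun j => h j * F j i)) x + rsum (fun j => h j * g j).
Proof.
rewrite /dotv /rsum.
under eq_bigr => j _ do rewrite RmulDr.
rewrite big_split /=; congr (_ + _).
under eq_bigr => j _ do rewrite big_distrr /=.
rewrite exchange_big /=; apply: eq_bigr => i _.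
rewrite big_distrl /=; apply: eq_bigr => j _; lra.
Qed.
Lemma SOCr_pre n k (P : vec k -> Prop) (G : vec n -> vec k) :
  (forall j, affine (fun x => G x j)) -> SOCr P -> SOCr (fun x => P (G x)).
Proof.
move=> HG [m [S H]].
have [Fg HF] : exists Fg : 'I_k -> (vec n * R), forall j x, G x j = dotv (Fg j).1 x + (Fg j).2.
  apply: (@fin_choice _ k (fun j (p : vec n * R) => forall x, G x j = dotv p.1 x + p.2)) => j.
  by have [f [b Hf]] := HG j; exists (f, b).
pose F := fun j => (Fg j).1; pose g := fun j => (Fg j).2.
have EG : forall x, G x = (fun j => dotv (F j) x + g j).
  by move=> x; apply: functional_extensionality => j; rewrite HF.
exists m, (map_sys (@trP n k m F g) S) => x; rewrite EG H; split.
  move=> [u Hu]; exists u; apply/(@holds_map _ _ _ _ (@trP n k m F g) S (fun j => dotv (F j) x + g j) u x u) => // f.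
  rewrite /eval_aff /trP /= dotv_comp; lra.
move=> [u Hu]; exists u.
have HE : forall f, eval_aff (@trP n k m F g f) x u = eval_aff f (fun j => dotv (F j) x + g j) u.
  move=> f; rewrite /eval_aff /trP /= dotv_comp; lra.
exact: (proj1 (holds_map S HE) Hu).
Qed.

Definition aff0 n (f : vec n) (b : R) : affform n 0 := ((f, fun _ => 0), b).
Lemma eval_aff0 n f b (x : vec n) (u : vec 0) : eval_aff (aff0 f b) x u = dotv f x + b.
Proof. by rewrite /eval_aff /= dotv_vec0; lra. Qed.

Lemma SOCr_true n : SOCr (fun _ : vec n => True).
Proof.
exists 0%N, (Sys [::] [::] [::]) => x; split => // _; exists (fun _ => 0).
by split; [|split] => f.
Qed.
Lemma SOCr_eq0 n (L : vec n -> R) : affine L -> SOCr (fun x => L x = 0).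
Proof.
move=> [f [b H]]; exists 0%N, (Sys [:: aff0 f b] [::] [::]) => x; split.
  move=> E; exists (fun _ => 0); split; [|split] => //= g; case=> // <-.
  by rewrite eval_aff0 -H.
move=> [u [H1 _]]; rewrite H -(eval_aff0 f b x u); apply: H1; by left.
Qed.
Lemma SOCr_le0 n (L : vec n -> R) : affine L -> SOCr (fun x => L x <= 0).
Proof.
move=> [f [b H]]; exists 0%N, (Sys [::] [:: aff0 f b] [::]) => x; split.
  move=> E; exists (fun _ => 0); split; [|split] => //= g; case=> // <-.
  by rewrite eval_aff0 -H.
move=> [u [_ [H1 _]]]; rewrite H -(eval_aff0 f b x u); apply: H1; by left.
Qed.
Lemma SOCr_soc n d (L : 'I_d -> vec n -> R) (M : vec n -> R) :
  (forall i, affine (L i)) -> affine M -> SOCr (fun x => norm2 (fun i => L i x) <= M x).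
Proof.
move=> HL [f [b HM]].
have [Fg HF] : exists Fg : 'I_d -> (vec n * R), forall j x, L j x = dotv (Fg j).1 x + (Fg j).2.
  apply: (@fin_choice _ d (fun j (p : vec n * R) => forall x, L j x = dotv p.1 x + p.2)) => j.
  by have [f' [b' Hf]] := HL j; exists (f', b').
pose s : soc_c n 0 := (existT _ d (fun i => aff0 (Fg i).1 (Fg i).2), aff0 f b).
exists 0%N, (Sys [::] [::] [:: s]) => x.
have EN : norm2 (fun i => L i x) = norm2 (fun i => eval_aff (projT2 s.1 i) x (fun _ => 0)).
  by apply: norm2_ext => i; rewrite /= eval_aff0 HF.
split.
  move=> E; exists (fun _ => 0); split; [|split] => //= g; case=> // <-.
  by rewrite /= -EN eval_aff0 -HM.
move=> [u [_ [_ H1]]]; have := H1 s (or_introl erefl).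
have EN' : norm2 (fun i => L i x) = norm2 (fun i => eval_aff (projT2 s.1 i) x u).
  by apply: norm2_ext => i; rewrite /= eval_aff0 HF.
by rewrite -EN' /= eval_aff0 -HM.
Qed.
Lemma SOCr_le n (L M : vec n -> R) : affine L -> affine M -> SOCr (fun x => L x <= M x).
Proof.
move=> HL HM; apply: (SOCr_ext (P := fun x => L x - M x <= 0)); first by move=> x; lra.
apply: SOCr_le0; exact: affine_sub.
Qed.
Lemma SOCr_eq n (L M : vec n -> R) : affine L -> affine M -> SOCr (fun x => L x = M x).
Proof.
move=> HL HM; apply: (SOCr_ext (P := fun x => L x - M x = 0)); first by move=> x; lra.
apply: SOCr_eq0; exact: affine_sub.
Qed.
Lemma SOCr_forall n M (P : 'I_M -> vec n -> Prop) :
  (forall j, SOCr (P j)) -> SOCr (fun x => forall j, P j x).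
Proof.
elim: M P => [|M IH] P H.
  apply: (SOCr_ext (P := fun _ => True)); last exact: SOCr_true.
  by move=> x; split => // _ [].
apply: (SOCr_ext (P := fun x => (forall j : 'I_M, P (widen_ord (leqnSn M) j) x) /\ P ord_max x)).
  move=> x; split; last by move=> K; split => [j|]; apply: K.
  move=> [K1 K2] j; case: (unliftP ord_max j) => [j' ->|->] //.
  have -> : lift ord_max j' = widen_ord (leqnSn M) j' by apply: val_inj; rewrite /= /bump leqNgt ltn_ord.
  exact: K1.
apply: SOCr_and => //; apply: IH => j; exact: H.
Qed.

Fixpoint Psi n (Ks : seq (R -> vec n -> Prop)) (mu : R) (z : vec n) : Prop :=
  match Ks with
  | [::] => mu = 0 /\ forall c, z c = 0
  | K :: Ks' => exists mu' z' l w, Psi Ks' mu' z' /\ K l w /\ mu = mu' + l /\ forall c, z c = z' c + w c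
  end.

Definition Kgood n (K : R -> vec n -> Prop) :=
  K 0 (fun _ => 0) /\
  (forall l1 w1 l2 w2, K l1 w1 -> K l2 w2 -> K (l1 + l2) (fun c => w1 c + w2 c)) /\
  (forall c l w, 0 <= c -> K l w -> K (c * l) (fun i => c * w i)).

Lemma K_ext n (K : R -> vec n -> Prop) l l' w w' : l = l' -> (forall c, w c = w' c) -> K l w -> K l' w'.
Proof. by move=> -> E; have -> : w = w' by apply: functional_extensionality. Qed.

Lemma Psi0 n (Ks : seq (R -> vec n -> Prop)) : (forall K, List.In K Ks -> Kgood K) -> Psi Ks 0 (fun _ => 0).
Proof.
elim: Ks => [|K Ks IH] H /=; first by split.
exists 0, (fun _ => 0), 0, (fun _ => 0); split; [apply: IH => K' HK'; apply: H; by right|].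
split; [by have [] := H K (or_introl erefl)|split => *; lra].
Qed.
Lemma Psi_add n (Ks : seq (R -> vec n -> Prop)) : (forall K, List.In K Ks -> Kgood K) ->
  forall m1 z1 m2 z2, Psi Ks m1 z1 -> Psi Ks m2 z2 -> Psi Ks (m1 + m2) (fun c => z1 c + z2 c).
Proof.
elim: Ks => [|K Ks IH] H m1 z1 m2 z2 /=.
  move=> [-> E1] [-> E2]; split => [|c]; [lra|rewrite E1 E2; lra].
move=> [m1' [z1' [l1 [w1 [P1 [K1 [E1 F1]]]]]]] [m2' [z2' [l2 [w2 [P2 [K2 [E2 F2]]]]]]].
exists (m1' + m2'), (fun c => z1' c + z2' c), (l1 + l2), (fun c => w1 c + w2 c); split.
  apply: IH => //; move=> K' HK'; apply: H; by right.
split; first by have [_ [HA _]] := H K (or_introl erefl); apply: HA.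
split => [|c]; [lra | rewrite F1 F2; lra].
Qed.
Lemma Psi_scal n (Ks : seq (R -> vec n -> Prop)) : (forall K, List.In K Ks -> Kgood K) ->
  forall c m z, 0 <= c -> Psi Ks m z -> Psi Ks (c * m) (fun i => c * z i).
Proof.
elim: Ks => [|K Ks IH] H c m z Hc /=.
  move=> [-> E]; split => [|i]; [lra|rewrite E; lra].
move=> [m' [z' [l [w [P [K1 [E F]]]]]]].
exists (c * m'), (fun i => c * z' i), (c * l), (fun i => c * w i); split.
  apply: IH => //; move=> K' HK'; apply: H; by right.
split; first by have [_ [_ HS]] := H K (or_introl erefl); apply: HS.
split => [|i]; [rewrite E; lra | rewrite F; lra].
Qed.
Lemma Psi_in n (Ks : seq (R -> vec n -> Prop)) : (forall K, List.In K Ks -> Kgood K) ->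
  forall K z, List.In K Ks -> K 1 z -> Psi Ks 1 z.
Proof.
elim: Ks => [|K0 Ks IH] H K z //= [<-|HK] Kz.
  exists 0, (fun _ => 0), 1, z; split; first by apply: Psi0 => K' HK'; apply: H; right.
  split => //; split => [|c]; lra.
exists 1, z, 0, (fun _ => 0); split; first by apply: (IH _ K) => // K' HK'; apply: H; right.
split; first by have [] := H K0 (or_introl erefl).
split => [|c]; lra.
Qed.

Definition vconvex n (Q : vec n -> Prop) :=
  forall u v t, 0 <= t <= 1 -> Q u -> Q v -> Q (fun c => t * u c + (1 - t) * v c).

Lemma Psi_conv n (Ks : seq (R -> vec n -> Prop)) (Q : vec n -> Prop) : vconvex Q ->
  (forall K, List.In K Ks -> forall l w, K l w -> 0 <= l /\ (l = 0 -> forall c, w c = 0) /\ (0 < l -> Q (fun c => w c / l))) ->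
  forall m z, Psi Ks m z -> 0 <= m /\ (m = 0 -> forall c, z c = 0) /\ (0 < m -> Q (fun c => z c / m)).
Proof.
move=> HQ; elim: Ks => [|K Ks IH] H m z /=.
  move=> [-> E]; split; [lra|split => // ?; lra].
move=> [m' [z' [l [w [P [K1 [E F]]]]]]].
have [Hm' [Z' Q']] := IH (fun K' HK' => H K' (or_intror HK')) _ _ P.
have [Hl [Zl Ql]] := H K (or_introl erefl) _ _ K1.
split; first lra.
split.
  move=> m0 c; rewrite F Z' ?Zl; lra.
move=> mpos.
have [m'0|m'pos] : m' = 0 \/ 0 < m' by lra.
  have Z := Z' m'0; have lpos : 0 < l by lra.
  have -> : (fun c => z c / m) = (fun c => w c / l).
    apply: functional_extensionality => c; rewrite F Z E m'0; field; lra.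
  exact: Ql.
have [l0|lpos] : l = 0 \/ 0 < l by lra.
  have Z := Zl l0.
  have -> : (fun c => z c / m) = (fun c => z' c / m').
    apply: functional_extensionality => c; rewrite F Z E l0; field; lra.
  exact: Q'.
have -> : (fun c => z c / m) = (fun c => (m' / m) * (z' c / m') + (1 - m' / m) * (w c / l)).
  apply: functional_extensionality => c; rewrite F E; field; lra.
have tm : m' / m * m = m' by field; lra.
apply: HQ; [split; nra | exact: Q' | exact: Ql].
Qed.

Definition hd1 n (v : vec (1 + n)) : R := v (lshift n ord0).
Lemma affine_hd n : affine (fun v : vec (1 + n) => hd1 v).
Proof. exact: affine_coord. Qed.

Lemma Psi_socr n (Ks : seq (R -> vec n -> Prop)) :
  (forall K, List.In K Ks -> SOCr (fun v : vec (1 + n) => K (hd1 v) (vr v))) ->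
  SOCr (fun v : vec (1 + n) => Psi Ks (hd1 v) (vr v)).
Proof.
elim: Ks => [|K Ks IH] H /=.
  apply: SOCr_and; first by apply: SOCr_eq; [exact: affine_hd | exact: affine_const].
  apply: SOCr_forall => c; apply: SOCr_eq; [exact: affine_coord | exact: affine_const].
have IH' := IH (fun K' HK' => H K' (or_intror HK')).
have HK := H K (or_introl erefl).
pose G1 := fun u : vec ((1 + n) + ((1 + n) + (1 + n))) => vl (vr u).
pose G2 := fun u : vec ((1 + n) + ((1 + n) + (1 + n))) => vr (vr u).
have S1 : SOCr (fun u : vec ((1 + n) + ((1 + n) + (1 + n))) => Psi Ks (hd1 (G1 u)) (vr (G1 u))).
  apply: (SOCr_pre (P := fun v : vec (1 + n) => Psi Ks (hd1 v) (vr v))) => // j.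
  exact: (affine_coord (rshift (1 + n) (lshift (1 + n) j))).
have S2 : SOCr (fun u : vec ((1 + n) + ((1 + n) + (1 + n))) => K (hd1 (G2 u)) (vr (G2 u))).
  apply: (SOCr_pre (P := fun v : vec (1 + n) => K (hd1 v) (vr v))) => // j.
  exact: (affine_coord (rshift (1 + n) (rshift (1 + n) j))).
have S3 : SOCr (fun u : vec ((1 + n) + ((1 + n) + (1 + n))) => hd1 (vl u) = hd1 (G1 u) + hd1 (G2 u)).
  apply: SOCr_eq; first exact: affine_coord.
  apply: affine_add; exact: affine_coord.
have S4 : SOCr (fun u : vec ((1 + n) + ((1 + n) + (1 + n))) => forall c, vr (vl u) c = vr (G1 u) c + vr (G2 u) c).
  apply: SOCr_forall => c; apply: SOCr_eq; first exact: affine_coord.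
  apply: affine_add; exact: affine_coord.
have := SOCr_ex (SOCr_and S1 (SOCr_and S2 (SOCr_and S3 S4))).
apply: SOCr_ext => v; split.
  move=> [y]; rewrite /G1 /G2 !vl_vcat !vr_vcat => [[P1 [P2 [P3 P4]]]].
  exists (hd1 (vl y)), (vr (vl y)), (hd1 (vr y)), (vr (vr y)).
  split; [exact P1 | split; [exact P2 | split; [exact P3 | exact P4]]].
move=> [m' [z' [l [w [P1 [P2 [P3 P4]]]]]]].
exists (vcat (vcat (fun _ => m') z') (vcat (fun _ => l) w)).
rewrite /G1 /G2 !vl_vcat !vr_vcat /hd1 !vcatL. rewrite vl_vcat vr_vcat vcatL.
split; [exact P1|split; [exact P2|split; [exact P3|exact P4]]].
Qed.

Definition gcat T n k (x : 'I_n -> T) (y : 'I_k -> T) : 'I_(n + k) -> T :=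
  fun c => match split c with inl i => x i | inr j => y j end.
Lemma gcatL T n k (x : 'I_n -> T) (y : 'I_k -> T) i : gcat x y (lshift k i) = x i.
Proof. by rewrite /gcat (unsplitK (inl i : 'I_n + 'I_k)). Qed.
Lemma gcatR T n k (x : 'I_n -> T) (y : 'I_k -> T) j : gcat x y (rshift n j) = y j.
Proof. by rewrite /gcat (unsplitK (inr j : 'I_n + 'I_k)). Qed.

Lemma conv_in n (S : vec n -> Prop) z : S z -> conv S z.
Proof.
move=> Sz; exists 1%N, (fun _ => 1), (fun _ => z); split; first by move=> _; lra.
split; first by rewrite rsumS rsum_ord0; lra.
split => // i; rewrite rsumS rsum_ord0; lra.
Qed.
Lemma conv_convex n (S : vec n -> Prop) : vconvex (conv S).
Proof.
move=> u v t Ht [k1 [l1 [p1 [L1 [S1 [P1 E1]]]]]] [k2 [l2 [p2 [L2 [S2 [P2 E2]]]]]].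
exists (k1 + k2)%N, (gcat (fun j => t * l1 j) (fun j => (1 - t) * l2 j)), (gcat p1 p2); split.
  move=> j; rewrite /gcat; case: (split j) => a; [have := L1 a | have := L2 a]; nra.
split.
  rewrite rsum_split.
  rewrite (rsum_ext (G := fun j => t * l1 j)); last by move=> j; rewrite gcatL.
  rewrite (rsum_ext (F := fun j => gcat _ _ (rshift k1 j)) (G := fun j => (1 - t) * l2 j)); last by move=> j; rewrite gcatR.
  rewrite !rsum_scal S1 S2; lra.
split.
  move=> j; rewrite /gcat; case: (split j) => a; [exact: P1 | exact: P2].
move=> i; rewrite rsum_split.
rewrite (rsum_ext (G := fun j => t * (l1 j * p1 j i))); last by move=> j /=; rewrite !gcatL; lra.
rewrite (rsum_ext (G := fun j => (1 - t) * (l2 j * p2 j i))); last by move=> j /=; rewrite !gcatR; lra.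
by rewrite !rsum_scal E1 E2.
Qed.

Lemma Psi_ext n (Ks : seq (R -> vec n -> Prop)) m m' z z' : m = m' -> (forall c, z c = z' c) -> Psi Ks m z -> Psi Ks m' z'.
Proof. by move=> -> E; have -> : z = z' by apply: functional_extensionality. Qed.

Lemma conv_Psi n (Ks : seq (R -> vec n -> Prop)) (S : vec n -> Prop) :
  (forall K, List.In K Ks -> Kgood K) -> (forall p, S p -> Psi Ks 1 p) ->
  forall z, conv S z -> Psi Ks 1 z.
Proof.
move=> HK HS z [k [l [p [L [S1 [P E]]]]]].
suff : Psi Ks (rsum l) (fun i => rsum (fun j => l j * p j i)).
  by apply: Psi_ext => // c; rewrite E.
elim: k l p L {S1} P {E} => [|k IH] l p L P.
  apply: (Psi_ext (m := 0) (z := fun _ => 0)); [by rewrite rsum_ord0 | by move=> c; rewrite rsum_ord0 | exact: Psi0].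
rewrite rsumS.
apply: (Psi_ext (m := rsum (fun j : 'I_k => l (widen_ord (leqnSn k) j)) + l ord_max * 1)
         (z := fun i => rsum (fun j : 'I_k => l (widen_ord (leqnSn k) j) * p (widen_ord (leqnSn k) j) i) + l ord_max * p ord_max i)).
- lra.
- by move=> c; rewrite rsumS.
apply: Psi_add => //.
  apply: IH => j; [exact: L | exact: P].
apply: Psi_scal; [exact: HK | exact: L | exact: HS].
Qed.

Lemma affine_mulc n c (L : vec n -> R) : affine L -> affine (fun x => L x * c).
Proof. move=> H; apply: (affine_ext (L := fun x => c * L x)); [move=> x; lra | exact: affine_scal]. Qed.
Lemma In_mem (T : eqType) (x : T) (s : seq T) : x \in s -> List.In x s.
Proof. elim: s => [|y s IH] //=; rewrite in_cons => /orP [/eqP ->|/IH]; auto. Qed.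

Section Main.
Variables (N : nat) (a xl xu yl yu : vec N).
Hypotheses (ha : forall i, a i <> 0) (hx : forall i, xl i < xu i) (hy : forall i, yl i < yu i).

Definition lo : vec (N + N) := vcat xl yl.
Definition hi : vec (N + N) := vcat xu yu.
Definition qf (z : vec (N + N)) := rsum (fun i => a i * z (lshift N i) * z (rshift N i)).
Definition SS (z : vec (N + N)) := qf z = 0 /\ forall c, lo c <= z c <= hi c.

Lemma lohi c : lo c < hi c.
Proof. rewrite /lo /hi; case: (split_ordP c) => j ->; rewrite ?vcatL ?vcatR; auto. Qed.

Lemma SS_Sa z : SS z <-> S_a a xl xu yl yu z.
Proof.
rewrite /SS /S_a /qf /xpart /ypart; split.
  move=> [Q B]; split => //; split => i.
    by have := B (lshift N i); rewrite /lo /hi !vcatL.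
  by have := B (rshift N i); rewrite /lo /hi !vcatR.
move=> [Q [B1 B2]]; split => // c; rewrite /lo /hi; case: (split_ordP c) => j ->;
  rewrite ?vcatL ?vcatR; auto.
Qed.

Definition val3 (l u : R) (c : 'I_3) := if val c == 0%N then l else if val c == 1%N then u else 0.
Definition mode := {ffun 'I_N -> 'I_3 * 'I_3 * 'I_3}.
Definition xfree (md : mode) k := val (md k).2 == 0%N.
Definition yfree (md : mode) k := val (md k).2 == 1%N.
Definition vx (md : mode) k := val3 (xl k) (xu k) (md k).1.1.
Definition vy (md : mode) k := val3 (yl k) (yu k) (md k).1.2.
Definition hq md (w : vec (N + N)) :=
  rsum (fun k => a k * (if xfree md k then vy md k * w (lshift N k) else vx md k * w (rshift N k))).
Definition Klin (md : mode) (l : R) (w : vec (N + N)) :=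
  (forall c, l * lo c <= w c <= l * hi c) /\ 0 <= l /\
  (forall k, if xfree md k then True else w (lshift N k) = l * vx md k) /\
  (forall k, if yfree md k then True else w (rshift N k) = l * vy md k) /\
  hq md w = 0.

Lemma Klin_good md : Kgood (Klin md).
Proof.
split; [|split].
- split; first by move=> c; lra.
  split; first lra.
  split; first by move=> k; case: (xfree md k) => //; lra.
  split; first by move=> k; case: (yfree md k) => //; lra.
  rewrite /hq; transitivity (rsum (fun _ : 'I_N => 0)); last exact: rsum0.
  apply: rsum_ext => k; case: (xfree md k); lra.
- move=> l1 w1 l2 w2 [B1 [L1 [X1 [Y1 H1]]]] [B2 [L2 [X2 [Y2 H2]]]].
  split; first by move=> c; have := B1 c; have := B2 c; lra.
  split; first lra.
  split; first by move=> k; have := X1 k; have := X2 k; case: (xfree md k) => //; lra.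
  split; first by move=> k; have := Y1 k; have := Y2 k; case: (yfree md k) => //; lra.
  move: H1 H2; rewrite /hq => H1 H2.
  rewrite (rsum_ext (G := fun k => a k * (if xfree md k then vy md k * w1 (lshift N k) else vx md k * w1 (rshift N k))
     + a k * (if xfree md k then vy md k * w2 (lshift N k) else vx md k * w2 (rshift N k)))).
    by rewrite rsum_add H1 H2; lra.
  by move=> k; case: (xfree md k); lra.
- move=> c l w Hc [B1 [L1 [X1 [Y1 H1]]]].
  split; first by move=> i; have := B1 i; nra.
  split; first nra.
  split; first by move=> k; have := X1 k; case: (xfree md k) => // ->; lra.
  split; first by move=> k; have := Y1 k; case: (yfree md k) => // ->; lra.
  move: H1; rewrite /hq => H1.
  rewrite (rsum_ext (G := fun k => c * (a k * (if xfree md k then vy md k * w (lshift N k) else vx md k * w (rshift N k))))).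
    by rewrite rsum_scal H1; lra.
  by move=> k; case: (xfree md k); lra.
Qed.

Lemma box_zero l w : (forall c, l * lo c <= w c <= l * hi c) -> l = 0 -> forall c, w c = 0.
Proof. move=> B l0 c; have := B c; rewrite l0; lra. Qed.
Lemma box_div l w : (forall c, l * lo c <= w c <= l * hi c) -> 0 < l -> forall c, lo c <= w c / l <= hi c.
Proof.
move=> B lp c; have := B c => -[H1 H2]; split.
  apply: (Rmult_le_reg_r l) => //; field_simplify; lra.
apply: (Rmult_le_reg_r l) => //; field_simplify; lra.
Qed.

Lemma Klin_pt md l w : Klin md l w -> 0 <= l /\ (l = 0 -> forall c, w c = 0) /\ (0 < l -> conv SS (fun c => w c / l)).
Proof.
move=> [B [L [X [Y H]]]]; split => //; split; first exact: box_zero.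
move=> lp; apply: conv_in; split; last exact: box_div.
rewrite /qf -(Rmult_0_r (/ l)) -H /hq -rsum_scal; apply: rsum_ext => k.
have := X k; have := Y k.
case Ex: (xfree md k).
  have Ey : yfree md k = false by move: Ex; rewrite /xfree /yfree => /eqP ->.
  rewrite Ey => -> _; field; lra.
move=> _ ->; field; lra.
Qed.

Lemma affine_vr (c : 'I_(N + N)) : affine (fun v : vec (1 + (N + N)) => vr v c).
Proof. exact: (affine_coord (rshift 1 c)). Qed.
Lemma affine_hdc c : affine (fun v : vec (1 + (N + N)) => hd1 v * c).
Proof. apply: affine_mulc; exact: affine_hd. Qed.
Lemma affine_vrc c (i : 'I_(N + N)) : affine (fun v : vec (1 + (N + N)) => c * vr v i).
Proof. apply: affine_scal; exact: affine_vr. Qed.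
Lemma SOCr_box : SOCr (fun v : vec (1 + (N + N)) => forall c, hd1 v * lo c <= vr v c <= hd1 v * hi c).
Proof.
apply: SOCr_forall => c; apply: SOCr_and; apply: SOCr_le;
  first [exact: affine_hdc | exact: affine_vr].
Qed.
Lemma SOCr_cond (b : bool) n (P : vec n -> Prop) : SOCr P -> SOCr (fun v => if b then True else P v).
Proof. by case: b => // _; exact: SOCr_true. Qed.

Lemma Klin_socr md : SOCr (fun v : vec (1 + (N + N)) => Klin md (hd1 v) (vr v)).
Proof.
apply: SOCr_and; first exact: SOCr_box.
apply: SOCr_and; first by apply: SOCr_le; [exact: affine_const | exact: affine_hd].
apply: SOCr_and.
  apply: SOCr_forall => k; apply: SOCr_cond; apply: SOCr_eq; [exact: affine_vr | exact: affine_hdc].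
apply: SOCr_and.
  apply: SOCr_forall => k; apply: SOCr_cond; apply: SOCr_eq; [exact: affine_vr | exact: affine_hdc].
apply: SOCr_eq; last exact: affine_const.
apply: affine_sum => k; apply: affine_scal; case: (xfree md k); exact: affine_vrc.
Qed.

Definition bnd := {ffun 'I_N -> bool * bool}.
Definition sg (b : bool) : R := if b then 1 else -1.
Definition Xb (bd : bnd) k := if (bd k).1 then xu k else xl k.
Definition Yb (bd : bnd) k := if (bd k).2 then yu k else yl k.
Definition Cc i (bd : bnd) := rsum (fun k => if k == i then 0 else a k * Xb bd k * Yb bd k).
Definition kp i es et bd := sg es * sg et * (- Cc i bd / a i).
Definition s1 i (es : bool) := if es then xl i else - xu i.
Definition s2 i (es : bool) := if es then xu i else - xl i.
Definition t1 i (et : bool) := if et then yl i else - yu i.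
Definition t2 i (et : bool) := if et then yu i else - yl i.
Definition al i es et bd := Rmax (s1 i es) (kp i es et bd / t2 i et).
Definition be i es et bd :=
  if Rlt_dec 0 (t1 i et) then Rmin (s2 i es) (kp i es et bd / t1 i et) else s2 i es.
Definition hs (es : bool) i (w : vec (N + N)) := sg es * w (lshift N i).
Definition ht (et : bool) i (w : vec (N + N)) := sg et * w (rshift N i).

Definition Khyp i es et bd (l : R) (w : vec (N + N)) :=
  if Rlt_dec 0 (kp i es et bd) then
    (forall c, l * lo c <= w c <= l * hi c) /\ 0 <= l /\
    (forall k, if k == i then True else w (lshift N k) = l * Xb bd k) /\
    (forall k, if k == i then True else w (rshift N k) = l * Yb bd k) /\
    0 <= hs es i w /\ 0 <= ht et i w /\
    l * al i es et bd <= hs es i w /\ hs es i w <= l * be i es et bd /\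
    al i es et bd * be i es et bd * ht et i w + kp i es et bd * hs es i w <=
      kp i es et bd * (al i es et bd + be i es et bd) * l /\
    kp i es et bd * (l * l) <= hs es i w * ht et i w
  else l = 0 /\ forall c, w c = 0.

Lemma prod_add k l1 l2 p1 q1 p2 q2 : 0 <= k -> 0 <= l1 -> 0 <= l2 -> 0 <= p1 -> 0 <= q1 -> 0 <= p2 -> 0 <= q2 ->
  k * (l1 * l1) <= p1 * q1 -> k * (l2 * l2) <= p2 * q2 -> k * ((l1 + l2) * (l1 + l2)) <= (p1 + p2) * (q1 + q2).
Proof.
move=> Hk H1 H2 P1 Q1 P2 Q2 E1 E2.
have A0 : 0 <= k * l1 * l2 by apply: Rmult_le_pos => //; apply: Rmult_le_pos.
have S : (p1 * q2 + p2 * q1) * (p1 * q2 + p2 * q1) >= 4 * (p1 * q1) * (p2 * q2) by have h := Rle_0_sqr (p1 * q2 - p2 * q1); rewrite /Rsqr in h; nra.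
have T : (p1 * q1) * (p2 * q2) >= (k * (l1 * l1)) * (k * (l2 * l2)).
  apply: Rle_ge; apply: Rmult_le_compat => //; nra.
have P0 : 0 <= p1 * q2 + p2 * q1 by apply: Rplus_le_le_0_compat; apply: Rmult_le_pos.
have T' : (k * (l1 * l1)) * (k * (l2 * l2)) = (k * l1 * l2) * (k * l1 * l2) by ring.
have V : (p1 * q2 + p2 * q1) * (p1 * q2 + p2 * q1) >= (2 * (k * l1 * l2)) * (2 * (k * l1 * l2)) by lra.
have U : p1 * q2 + p2 * q1 >= 2 * (k * l1 * l2).
  case: (Rlt_or_le (p1 * q2 + p2 * q1) (2 * (k * l1 * l2))) => h; last lra.
  have : (p1 * q2 + p2 * q1) * (p1 * q2 + p2 * q1) < (2 * (k * l1 * l2)) * (2 * (k * l1 * l2)).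
    apply: Rmult_le_0_lt_compat; lra.
  lra.
have -> : k * ((l1 + l2) * (l1 + l2)) = k * (l1 * l1) + k * (l2 * l2) + 2 * (k * l1 * l2) by ring.
have -> : (p1 + p2) * (q1 + q2) = p1 * q1 + p2 * q2 + (p1 * q2 + p2 * q1) by ring.
lra.
Qed.

Lemma Khyp_good i es et bd : Kgood (Khyp i es et bd).
Proof.
rewrite /Kgood /Khyp /hs /ht; case: Rlt_dec => Kp; last first.
  split; first by split.
  split; first by move=> l1 w1 l2 w2 [-> E1] [-> E2]; split => [|c]; [lra | rewrite E1 E2; lra].
  by move=> c l w _ [-> E]; split => [|j]; [lra | rewrite E; lra].
split; [|split].
- split; first by move=> c; lra.
  split; first lra.
  split; first by move=> k; case: (k == i) => //; lra.
  split; first by move=> k; case: (k == i) => //; lra.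
  do 5 (split; first lra). lra.
- move=> l1 w1 l2 w2 [B1 [L1 [X1 [Y1 [S1 [T1 [A1 [C1 [D1 P1]]]]]]]]] [B2 [L2 [X2 [Y2 [S2 [T2 [A2 [C2 [D2 P2]]]]]]]]].
  split; first by move=> c; have := B1 c; have := B2 c; lra.
  split; first lra.
  split; first by move=> k; have := X1 k; have := X2 k; case: (k == i) => //; lra.
  split; first by move=> k; have := Y1 k; have := Y2 k; case: (k == i) => //; lra.
  do 5 (split; first lra).
  have := prod_add (k := kp i es et bd) (l1 := l1) (l2 := l2) (p1 := sg es * w1 (lshift N i)) (q1 := sg et * w1 (rshift N i))
    (p2 := sg es * w2 (lshift N i)) (q2 := sg et * w2 (rshift N i)); lra.
- move=> c l w Hc [B1 [L1 [X1 [Y1 [S1 [T1 [A1 [C1 [D1 P1]]]]]]]]].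
  split; first by move=> j; have := B1 j; nra.
  split; first nra.
  split; first by move=> k; have := X1 k; case: (k == i) => // ->; lra.
  split; first by move=> k; have := Y1 k; case: (k == i) => // ->; lra.
  do 5 (split; first nra).
  have -> : sg es * (c * w (lshift N i)) * (sg et * (c * w (rshift N i))) = (c * c) * (sg es * w (lshift N i) * (sg et * w (rshift N i))) by ring.
  have -> : kp i es et bd * (c * l * (c * l)) = (c * c) * (kp i es et bd * (l * l)) by ring.
  apply: Rmult_le_compat_l => //; nra.
Qed.

Definition v2 (p q : R) : vec 2 := fun j => if val j == 0%N then p else q.
Lemma norm2_v2 p q : norm2 (v2 p q) = sqrt (p * p + q * q).
Proof. rewrite /norm2 rsumS rsumS rsum_ord0 /v2 /=; congr sqrt; lra. Qed.

Lemma soc2 K l s t : 0 <= s -> 0 <= t -> 0 <= K ->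
  (norm2 (v2 (2 * sqrt K * l) (s - t)) <= s + t <-> K * (l * l) <= s * t).
Proof.
move=> Hs Ht HK; rewrite norm2_v2.
have E : 2 * sqrt K * l * (2 * sqrt K * l) = 4 * K * (l * l).
  have := sqrt_sqrt K HK; nra.
rewrite E; split.
  move=> H.
  have H0 : 0 <= 4 * K * (l * l) + (s - t) * (s - t) by have := Rle_0_sqr l; have := Rle_0_sqr (s - t); rewrite /Rsqr => *; nra.
  have H1 := sqrt_pos (4 * K * (l * l) + (s - t) * (s - t)).
  have H2 := sqrt_sqrt _ H0.
  have : sqrt (4 * K * (l * l) + (s - t) * (s - t)) * sqrt (4 * K * (l * l) + (s - t) * (s - t)) <= (s + t) * (s + t).
    apply: Rmult_le_compat => //.
  nra.
move=> H; rewrite -(sqrt_square (s + t)); last lra.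
apply: sqrt_le_1_alt; nra.
Qed.

Lemma Khyp_socr i es et bd : SOCr (fun v : vec (1 + (N + N)) => Khyp i es et bd (hd1 v) (vr v)).
Proof.
rewrite /Khyp; case: Rlt_dec => Kp; last first.
  apply: SOCr_and; first by apply: SOCr_eq; [exact: affine_hd | exact: affine_const].
  apply: SOCr_forall => c; apply: SOCr_eq; [exact: affine_vr | exact: affine_const].
set K := kp i es et bd; set A := al i es et bd; set B := be i es et bd.
apply: SOCr_and; first exact: SOCr_box.
apply: SOCr_and; first by apply: SOCr_le; [exact: affine_const | exact: affine_hd].
apply: SOCr_and.
  apply: SOCr_forall => k; apply: SOCr_cond; apply: SOCr_eq; [exact: affine_vr | exact: affine_hdc].
apply: SOCr_and.
  apply: SOCr_forall => k; apply: SOCr_cond; apply: SOCr_eq; [exact: affine_vr | exact: affine_hdc].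
have Hs : affine (fun v : vec (1 + (N + N)) => hs es i (vr v)) by exact: affine_vrc.
have Ht : affine (fun v : vec (1 + (N + N)) => ht et i (vr v)) by exact: affine_vrc.
apply: (SOCr_ext (P := fun v => 0 <= hs es i (vr v) /\ 0 <= ht et i (vr v) /\
   hd1 v * A <= hs es i (vr v) /\ hs es i (vr v) <= hd1 v * B /\
   A * B * ht et i (vr v) + K * hs es i (vr v) <= K * (A + B) * hd1 v /\
   norm2 (v2 (2 * sqrt K * hd1 v) (hs es i (vr v) - ht et i (vr v))) <= hs es i (vr v) + ht et i (vr v))).
  move=> v; split; move=> [P1 [P2 [P3 [P4 [P5 P6]]]]]; do 5 (split => //).
    exact: (proj1 (soc2 (hd1 v) P1 P2 (Rlt_le _ _ Kp)) P6).
  exact: (proj2 (soc2 (hd1 v) P1 P2 (Rlt_le _ _ Kp)) P6).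
apply: SOCr_and; first by apply: SOCr_le; [exact: affine_const | exact: Hs].
apply: SOCr_and; first by apply: SOCr_le; [exact: affine_const | exact: Ht].
apply: SOCr_and; first by apply: SOCr_le; [exact: affine_hdc | exact: Hs].
apply: SOCr_and; first by apply: SOCr_le; [exact: Hs | exact: affine_hdc].
apply: SOCr_and.
  apply: SOCr_le; last exact: affine_scal (affine_hd _).
  by apply: affine_add; apply: affine_scal.
apply: (SOCr_ext (P := fun v => norm2 (fun j => v2 (2 * sqrt K * hd1 v) (hs es i (vr v) - ht et i (vr v)) j) <= hs es i (vr v) + ht et i (vr v))) => //.
apply: SOCr_soc; last exact: affine_add.
move=> j; rewrite /v2; case: (val j == 0%N).
  exact: affine_scal (affine_hd _).
exact: affine_sub.
Qed.

Lemma interval_comb p x q : p <= x <= q -> exists th, 0 <= th <= 1 /\ x = th * p + (1 - th) * q.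
Proof.
move=> [H1 H2]; case: (Req_dec p q) => [E|E].
  exists 1; split; [lra | rewrite E in H1 *; lra].
exists ((q - x) / (q - p)); split; last by field; lra.
have Hp : 0 < q - p by lra.
split.
  apply: Rmult_le_pos; [lra | apply: Rlt_le; exact: Rinv_0_lt_compat].
apply: (Rmult_le_reg_r (q - p)) => //; field_simplify; lra.
Qed.
Lemma sg2 b : sg b * sg b = 1.
Proof. by case: b => /=; lra. Qed.
Lemma s_range es i v : xl i <= v <= xu i <-> s1 i es <= sg es * v <= s2 i es.
Proof. by rewrite /s1 /s2 /sg; case: es; lra. Qed.
Lemma t_range et i v : yl i <= v <= yu i <-> t1 i et <= sg et * v <= t2 i et.
Proof. by rewrite /t1 /t2 /sg; case: et; lra. Qed.
Lemma div_le K s t : 0 < s -> K <= t * s -> K / s <= t.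
Proof. move=> Hs H; apply: (Rmult_le_reg_r s) => //; field_simplify; lra. Qed.
Lemma le_div K s t : 0 < s -> t * s <= K -> t <= K / s.
Proof. move=> Hs H; apply: (Rmult_le_reg_r s) => //; field_simplify; lra. Qed.
Lemma from_div_le K s t : 0 < t -> K / t <= s -> K <= s * t.
Proof.
move=> Ht H; have : K / t * t <= s * t by apply: Rmult_le_compat_r; lra.
have -> : K / t * t = K by field; lra.
done.
Qed.
Lemma from_le_div K s t : 0 < t -> s <= K / t -> s * t <= K.
Proof.
move=> Ht H; have : s * t <= K / t * t by apply: Rmult_le_compat_r; lra.
have -> : K / t * t = K by field; lra.
done.
Qed.

Definition upd i (z : vec (N + N)) (u v : R) : vec (N + N) :=
  fun c => if c == lshift N i then u else if c == rshift N i then v else z c.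
Lemma upd_l i z u v k : upd i z u v (lshift N k) = if k == i then u else z (lshift N k).
Proof. by rewrite /upd eq_lshift eq_lrshift; case: (k == i). Qed.
Lemma upd_r i z u v k : upd i z u v (rshift N k) = if k == i then v else z (rshift N k).
Proof. by rewrite /upd eq_rlshift eq_rshift. Qed.

Lemma curve_SS i es et bd z sig :
  0 < kp i es et bd -> (forall c, lo c <= z c <= hi c) ->
  (forall k, k != i -> z (lshift N k) = Xb bd k /\ z (rshift N k) = Yb bd k) ->
  0 < t2 i et -> al i es et bd <= sig <= be i es et bd ->
  SS (upd i z (sg es * sig) (sg et * (kp i es et bd / sig))).
Proof.
move=> Kp B O T2 [S1 S2].
set K := kp i es et bd in Kp S1 S2 *.
have A1 : K / t2 i et <= al i es et bd by apply: Rmax_r.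
have A2 : s1 i es <= al i es et bd by apply: Rmax_l.
have Kt : 0 < K / t2 i et by apply: Rdiv_lt_0_compat.
have Sp : 0 < sig by lra.
have B2 : be i es et bd <= s2 i es.
  rewrite /be; case: (Rlt_dec 0 (t1 i et)) => ? /=; [apply: Rmin_l | lra].
split.
  rewrite /qf (rsum_D1 i) upd_l upd_r !eqxx.
  rewrite (rsum_ext (G := fun k => if k == i then 0 else a k * Xb bd k * Yb bd k)); last first.
    move=> k; rewrite upd_l upd_r; case: eqP => [//|/eqP Hk].
    by have [-> ->] := O k Hk.
  rewrite -/(Cc i bd).
  have E : a i * (sg es * sig) * (sg et * (K / sig)) = sg es * sg es * (sg et * sg et) * (a i * (- Cc i bd / a i)).
    rewrite /K /kp; field; split; [exact: ha | lra].
  rewrite E !sg2; field; exact: ha.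
move=> c; rewrite /lo /hi; case: (split_ordP c) => j -> ; rewrite ?vcatL ?vcatR.
  rewrite upd_l; case: eqP => [->|_]; last by have := B (lshift N j); rewrite /lo /hi vcatL vcatL.
  apply/(s_range es); rewrite -Rmult_assoc sg2; lra.
rewrite upd_r; case: eqP => [->|_]; last by have := B (rshift N j); rewrite /lo /hi vcatR vcatR.
apply/(t_range et); rewrite -Rmult_assoc sg2 Rmult_1_l; split.
  rewrite /be in S2; case: (Rlt_dec 0 (t1 i et)) S2 => T1 /= S2.
    have H := Rle_trans _ _ _ S2 (Rmin_r _ _); have H2 := from_le_div T1 H.
    apply: le_div => //; rewrite /K; lra.
  have : 0 < K / sig by apply: Rdiv_lt_0_compat.
  lra.
have H := from_div_le T2 (Rle_trans _ _ _ A1 S1).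
apply: div_le => //; rewrite /K in H *; nra.
Qed.

Lemma Khyp_pt i es et bd l w : Khyp i es et bd l w ->
  0 <= l /\ (l = 0 -> forall c, w c = 0) /\ (0 < l -> conv SS (fun c => w c / l)).
Proof.
rewrite /Khyp; case: Rlt_dec => Kp; last first.
  by move=> [-> E]; split; [lra | split => // H; lra].
move=> [B [L [X [Y [P1 [P2 [P3 [P4 [P5 P6]]]]]]]]].
split => //; split; first exact: box_zero.
move=> lp.
set K := kp i es et bd in Kp P5 P6 *; set A := al i es et bd in P3 P5; set Bt := be i es et bd in P4 P5.
pose z := fun c => w c / l.
have Bz := box_div B lp.
have Oz : forall k, k != i -> z (lshift N k) = Xb bd k /\ z (rshift N k) = Yb bd k.
  move=> k /negbTE Hk; have := X k; have := Y k; rewrite Hk /z => -> ->; split; field; lra.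
pose s := sg es * z (lshift N i); pose t := sg et * z (rshift N i).
have Es : hs es i w = l * s by rewrite /hs /s /z; field; lra.
have Et : ht et i w = l * t by rewrite /ht /t /z; field; lra.
rewrite Es Et in P1 P2 P3 P4 P5 P6.
have s0 : 0 <= s by nra.
have t0 : 0 <= t by nra.
have sA : A <= s by nra.
have sB : s <= Bt by nra.
have chord : A * Bt * t + K * s <= K * (A + Bt) by nra.
have st : K <= s * t.
  apply: (Rmult_le_reg_l (l * l)); first nra.
  lra.
have tp : 0 < t by nra.
have T2 : 0 < t2 i et.
  have := Bz (rshift N i); rewrite /lo /hi !vcatR => /(t_range et) [_ H]; rewrite -/t in H; lra.
have A1 : K / t2 i et <= A by apply: Rmax_r.
have Kt : 0 < K / t2 i et by apply: Rdiv_lt_0_compat.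
have Ap : 0 < A by lra.
have sp : 0 < s by lra.
have Bp : 0 < Bt by lra.
have [mu [Hmu Emu]] := interval_comb (conj sA sB).
pose tc := mu * (K / A) + (1 - mu) * (K / Bt).
have Etc : tc * (A * Bt) = K * (A + Bt - s) by rewrite /tc Emu; field; lra.
have t_tc : t <= tc.
  have : A * Bt * t <= tc * (A * Bt) by rewrite Etc; lra.
  have ABp : 0 < A * Bt by apply: Rmult_lt_0_compat.
  nra.
have Ks_t : K / s <= t by apply: div_le => //; lra.
have [th [Hth Eth]] := interval_comb (conj Ks_t t_tc).
have zxi : z (lshift N i) = sg es * s by rewrite /s -Rmult_assoc sg2; lra.
have zyi : z (rshift N i) = sg et * t by rewrite /t -Rmult_assoc sg2; lra.
have -> : (fun c => w c / l) = (fun c => th * upd i z (sg es * s) (sg et * (K / s)) c +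
   (1 - th) * (fun c => mu * upd i z (sg es * A) (sg et * (K / A)) c + (1 - mu) * upd i z (sg es * Bt) (sg et * (K / Bt)) c) c).
  apply: functional_extensionality => c; rewrite /upd.
  case E1: (c == lshift N i).
    move/eqP: E1 => ->; rewrite -/(z (lshift N i)) zxi Emu; ring.
  case E2: (c == rshift N i).
    move/eqP: E2 => ->; rewrite -/(z (rshift N i)) zyi Eth /tc; ring.
  rewrite -/(z c); ring.
have Oz' : forall k, k != i -> z (lshift N k) = Xb bd k /\ z (rshift N k) = Yb bd k := Oz.
apply: conv_convex => //.
  by apply: conv_in; apply: curve_SS => //; lra.
apply: conv_convex => //.
  by apply: conv_in; apply: curve_SS => //; rewrite /A /Bt in sA sB *; lra.
apply: conv_in; apply: curve_SS => //; rewrite /A /Bt in sA sB *; lra.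
Qed.

Definition ltb (x y : R) : bool := if Rlt_dec x y then true else false.
Lemma ltbP x y : ltb x y = true <-> x < y.
Proof. by rewrite /ltb; case: Rlt_dec. Qed.
Definition freeb (z : vec (N + N)) c := ltb (lo c) (z c) && ltb (z c) (hi c).
Lemma freebP z c : freeb z c = true <-> lo c < z c < hi c.
Proof. rewrite /freeb; split; [move/andP => [/ltbP ? /ltbP ?] | move=> [? ?]; apply/andP; split; apply/ltbP]; auto. Qed.
Definition fc (z : vec (N + N)) := #|[set c | freeb z c]|.

Definition rho (l h x d : R) := if Rlt_dec 0 d then (h - x) / d else (l - x) / d.
Lemma rho_facts l h x d : l < x < h -> d <> 0 ->
  0 < rho l h x d /\ (x + rho l h x d * d = l \/ x + rho l h x d * d = h) /\
  forall t, 0 <= t <= rho l h x d -> l <= x + t * d <= h.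
Proof.
move=> [H1 H2] Hd; rewrite /rho; case: Rlt_dec => Hp /=.
  split; first by apply: Rdiv_lt_0_compat; lra.
  split; first by right; field; lra.
  move=> t [T1 T2]; have : t * d <= (h - x) / d * d by apply: Rmult_le_compat_r; lra.
  have -> : (h - x) / d * d = h - x by field; lra.
  nra.
have Hn : d < 0 by lra.
split.
  have -> : (l - x) / d = (x - l) / (- d) by field; lra.
  apply: Rdiv_lt_0_compat; lra.
split; first by left; field; lra.
move=> t [T1 T2]; have E : (l - x) / d * d = l - x by field; lra.
have : ((l - x) / d - t) * (- d) >= 0 by apply: Rle_ge; apply: Rmult_le_pos; lra.
nra.
Qed.

Definition rhoc (z d : vec (N + N)) c := rho (lo c) (hi c) (z c) (d c).
Definition vmove (z d : vec (N + N)) (t : R) : vec (N + N) := fun c => z c + t * d c.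

Lemma move_core z d c1 c2 h : (forall c, lo c <= z c <= hi c) ->
  freeb z c1 -> freeb z c2 -> (forall c, c != c1 -> c != c2 -> d c = 0) ->
  (h = c1 \/ h = c2) -> d h <> 0 ->
  (forall c, (c = c1 \/ c = c2) -> d c <> 0 -> rhoc z d h <= rhoc z d c) ->
  0 < rhoc z d h /\ (forall c, lo c <= z c + rhoc z d h * d c <= hi c) /\
  (fc (vmove z d (rhoc z d h)) < fc z)%N.
Proof.
move=> B F1 F2 Sd Hh dh Hmin.
have Fh : lo h < z h < hi h by case: Hh => ->; apply/freebP.
have [R1 [R2 R3]] := rho_facts Fh dh.
have inC : forall c, d c <> 0 -> (c = c1 \/ c = c2).
  move=> c dc; case: (eqVneq c c1) => [->|n1]; first by left.
  case: (eqVneq c c2) => [->|n2]; first by right.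
  by have := Sd c n1 n2.
have freeC : forall c, d c <> 0 -> lo c < z c < hi c.
  by move=> c /inC [->|->]; apply/freebP.
split => //; split.
  move=> c; case: (Req_dec (d c) 0) => [->|dc]; first by have := B c; lra.
  have [_ [_ R3']] := rho_facts (freeC c dc) dc.
  apply: R3'; split; first by rewrite /rhoc; lra.
  exact: Hmin (inC c dc) dc.
apply: proper_card; apply/properP; split.
  apply/subsetP => c; rewrite !inE => /freebP Hc; apply/freebP.
  case: (Req_dec (d c) 0) => [dc|dc]; last exact: freeC.
  by rewrite /vmove dc Rmult_0_r Rplus_0_r in Hc.
exists h; first by rewrite inE; apply/freebP.
rewrite inE; apply/negP => /freebP; rewrite /vmove /rhoc in R2 *; lra.
Qed.

Lemma move_one z d c1 c2 : (forall c, lo c <= z c <= hi c) ->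
  freeb z c1 -> freeb z c2 -> (forall c, c != c1 -> c != c2 -> d c = 0) ->
  (d c1 <> 0 \/ d c2 <> 0) ->
  exists t, 0 < t /\ (forall c, lo c <= z c + t * d c <= hi c) /\ (fc (vmove z d t) < fc z)%N.
Proof.
move=> B F1 F2 Sd Hd.
case: (Req_dec (d c1) 0) => [d1|d1].
  have d2 : d c2 <> 0 by case: Hd.
  exists (rhoc z d c2); apply: (move_core (c1 := c1) (c2 := c2)) => //; first by right.
  by move=> c [->|->] dc; [|lra].
case: (Req_dec (d c2) 0) => [d2|d2].
  exists (rhoc z d c1); apply: (move_core (c1 := c1) (c2 := c2)) => //; first by left.
  by move=> c [->|->] dc; [lra|].
case: (Rle_lt_dec (rhoc z d c1) (rhoc z d c2)) => Hr.
  exists (rhoc z d c1); apply: (move_core (c1 := c1) (c2 := c2)) => //; first by left.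
  by move=> c [->|->] dc; lra.
exists (rhoc z d c2); apply: (move_core (c1 := c1) (c2 := c2)) => //; first by right.
by move=> c [->|->] dc; lra.
Qed.

Lemma line_split z d c1 c2 : SS z -> freeb z c1 -> freeb z c2 ->
  (forall c, c != c1 -> c != c2 -> d c = 0) -> (d c1 <> 0 \/ d c2 <> 0) ->
  (forall t, qf (fun c => z c + t * d c) = 0) ->
  exists z1 z2 th, 0 <= th <= 1 /\ (forall c, z c = th * z1 c + (1 - th) * z2 c) /\
    SS z1 /\ SS z2 /\ (fc z1 < fc z)%N /\ (fc z2 < fc z)%N.
Proof.
move=> [Q B] F1 F2 Sd Hd Hq.
have [t1 [T1 [B1 C1]]] := move_one B F1 F2 Sd Hd.
have [t2 [T2 [B2 C2]]] := move_one (d := fun c => - d c) B F1 F2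
   (fun c n1 n2 => ltac:(rewrite /= (Sd c n1 n2); lra)) ltac:(case: Hd => H; [left|right]; lra).
exists (fun c => z c + t1 * d c), (fun c => z c + t2 * - d c), (t2 / (t1 + t2)).
split.
  split; first by apply: Rlt_le; apply: Rdiv_lt_0_compat; lra.
  apply: (Rmult_le_reg_r (t1 + t2)); first lra.
  field_simplify; lra.
split; first by move=> c; field; lra.
split; first by split.
split; last by split.
split => //; have := Hq (- t2); apply: eq_trans; congr qf.
by apply: functional_extensionality => c; lra.
Qed.

Lemma qf_movex z d t : (forall k, d (rshift N k) = 0) ->
  qf (fun c => z c + t * d c) = qf z + t * rsum (fun k => a k * d (lshift N k) * z (rshift N k)).
Proof.
move=> H; rewrite /qf -rsum_scal -rsum_add; apply: rsum_ext => k; rewrite H; ring.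
Qed.
Lemma qf_movey z d t : (forall k, d (lshift N k) = 0) ->
  qf (fun c => z c + t * d c) = qf z + t * rsum (fun k => a k * z (lshift N k) * d (rshift N k)).
Proof.
move=> H; rewrite /qf -rsum_scal -rsum_add; apply: rsum_ext => k; rewrite H; ring.
Qed.

Definition split_concl z := exists z1 z2 th, 0 <= th <= 1 /\ (forall c, z c = th * z1 c + (1 - th) * z2 c) /\
    SS z1 /\ SS z2 /\ (fc z1 < fc z)%N /\ (fc z2 < fc z)%N.

Lemma two_pick (i j : 'I_N) (P Q : R) (F : 'I_N -> R) : i != j ->
  rsum (fun k => F k * (if k == i then P else if k == j then Q else 0)) = F i * P + F j * Q.
Proof.
move=> ij; rewrite -(rsum_pick i (fun k => F k * P)) -(rsum_pick j (fun k => F k * Q)) -rsum_add.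
apply: rsum_ext => k; case: (eqVneq k i) => [->|ki]; first by rewrite (negbTE ij); ring.
case: (eqVneq k j) => [->|kj]; ring.
Qed.

Lemma xcase z i j : SS z -> i != j -> freeb z (lshift N i) -> freeb z (lshift N j) -> split_concl z.
Proof.
move=> Sz ij Fi Fj.
have ne : lshift N i != lshift N j by rewrite eq_lshift.
pose P := a j * z (rshift N j); pose Q := a i * z (rshift N i).
case: (classic (P = 0 /\ Q = 0)) => [[P0 Q0]|PQ].
  apply: (line_split (d := fun c => if c == lshift N i then 1 else 0) Sz Fi Fj).
  - by move=> c /negbTE -> _.
  - by left; rewrite eqxx; lra.
  move=> t; rewrite qf_movex; last by move=> k; rewrite eq_rlshift.
  rewrite (proj1 Sz) (rsum_ext (G := fun k => (a k * z (rshift N k)) * (if k == i then 1 else if k == j then 0 else 0))).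
    rewrite two_pick // -/Q Q0; ring.
  by move=> k; rewrite eq_lshift; case: (k == i); case: (k == j); ring.
apply: (line_split (d := fun c => if c == lshift N i then P else if c == lshift N j then - Q else 0) Sz Fi Fj).
- by move=> c /negbTE -> /negbTE ->.
- rewrite eqxx eq_lshift (eq_sym j i) (negbTE ij) eqxx.
  case: (Req_dec P 0) => HP; [right | by left]; move=> HQ; apply: PQ; split; lra.
move=> t; rewrite qf_movex; last by move=> k; rewrite !eq_rlshift.
rewrite (proj1 Sz) (rsum_ext (G := fun k => (a k * z (rshift N k)) * (if k == i then P else if k == j then - Q else 0))).
  rewrite two_pick // /P /Q; ring.
by move=> k; rewrite !eq_lshift; case: (k == i); case: (k == j); ring.
Qed.

Lemma ycase z i j : SS z -> i != j -> freeb z (rshift N i) -> freeb z (rshift N j) -> split_concl z.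
Proof.
move=> Sz ij Fi Fj.
pose P := a j * z (lshift N j); pose Q := a i * z (lshift N i).
case: (classic (P = 0 /\ Q = 0)) => [[P0 Q0]|PQ].
  apply: (line_split (d := fun c => if c == rshift N i then 1 else 0) Sz Fi Fj).
  - by move=> c /negbTE -> _.
  - by left; rewrite eqxx; lra.
  move=> t; rewrite qf_movey; last by move=> k; rewrite eq_lrshift.
  rewrite (proj1 Sz) (rsum_ext (G := fun k => (a k * z (lshift N k)) * (if k == i then 1 else if k == j then 0 else 0))).
    rewrite two_pick // -/Q Q0; ring.
  by move=> k; rewrite eq_rshift; case: (k == i); case: (k == j); ring.
apply: (line_split (d := fun c => if c == rshift N i then P else if c == rshift N j then - Q else 0) Sz Fi Fj).
- by move=> c /negbTE -> /negbTE ->.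
- rewrite eqxx eq_rshift (eq_sym j i) (negbTE ij) eqxx.
  case: (Req_dec P 0) => HP; [right | by left]; move=> HQ; apply: PQ; split; lra.
move=> t; rewrite qf_movey; last by move=> k; rewrite !eq_lrshift.
rewrite (proj1 Sz) (rsum_ext (G := fun k => (a k * z (lshift N k)) * (if k == i then P else if k == j then - Q else 0))).
  rewrite two_pick // /P /Q; ring.
by move=> k; rewrite !eq_rshift; case: (k == i); case: (k == j); ring.
Qed.

Definition pidx := (mode + ('I_N * bool * bool * bnd))%type.
Definition Kpc (p : pidx) : R -> vec (N + N) -> Prop :=
  match p with inl md => Klin md | inr h => Khyp h.1.1.1 h.1.1.2 h.1.2 h.2 end.
Definition Ks := [seq Kpc p | p <- enum {: pidx}].

Lemma Ks_in p : List.In (Kpc p) Ks.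
Proof. apply/In_map; exists p; split => //; apply: In_mem; by rewrite mem_enum. Qed.
Lemma Ks_all (Pr : (R -> vec (N + N) -> Prop) -> Prop) : (forall p, Pr (Kpc p)) -> forall K, List.In K Ks -> Pr K.
Proof. by move=> H K /In_map [p [_ <-]]. Qed.
Lemma Ks_good K : List.In K Ks -> Kgood K.
Proof. apply: Ks_all => -[md|[[[i es] et] bd]] /=; [exact: Klin_good | exact: Khyp_good]. Qed.

Definition code3 (v l u : R) : 'I_3 :=
  if Req_dec_T v l then @Ordinal 3 0 isT else if Req_dec_T v u then @Ordinal 3 1 isT else @Ordinal 3 2 isT.
Lemma code3P v l u : v = l \/ v = u \/ v = 0 -> val3 l u (code3 v l u) = v.
Proof.
move=> H; rewrite /code3 /val3; case: Req_dec_T => [E1|n1] /=; first by rewrite E1.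
case: Req_dec_T => [E2|n2] /=; first by rewrite E2.
lra.
Qed.
Definition fixb (v l u : R) := v = l \/ v = u \/ v = 0.
Definition emi (P : Prop) : bool := if excluded_middle_informative P then true else false.
Lemma emiP P : emi P = true <-> P.
Proof. by rewrite /emi; case: excluded_middle_informative. Qed.
Lemma emiF P : emi P = false <-> ~ P.
Proof. by rewrite /emi; case: excluded_middle_informative. Qed.

Lemma baseA z : SS z ->
  (forall k, fixb (z (lshift N k)) (xl k) (xu k) \/ fixb (z (rshift N k)) (yl k) (yu k)) ->
  exists p, Kpc p 1 z.
Proof.
move=> [Q B] Hf.
pose fr := fun k => if emi (fixb (z (lshift N k)) (xl k) (xu k)) then
   (if emi (fixb (z (rshift N k)) (yl k) (yu k)) then @Ordinal 3 2 isT else @Ordinal 3 1 isT) else @Ordinal 3 0 isT.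
pose md : mode := [ffun k => (code3 (z (lshift N k)) (xl k) (xu k), code3 (z (rshift N k)) (yl k) (yu k), fr k)].
have XF : forall k, xfree md k = ~~ emi (fixb (z (lshift N k)) (xl k) (xu k)).
  move=> k; rewrite /xfree ffunE /= /fr; case: (emi _) => //; case: (emi _) => //.
have YF : forall k, yfree md k = emi (fixb (z (lshift N k)) (xl k) (xu k)) && ~~ emi (fixb (z (rshift N k)) (yl k) (yu k)).
  move=> k; rewrite /yfree ffunE /= /fr; case: (emi _) => //; case: (emi _) => //.
have VX : forall k, emi (fixb (z (lshift N k)) (xl k) (xu k)) -> vx md k = z (lshift N k).
  by move=> k /emiP H; rewrite /vx ffunE /=; apply: code3P.
have VY : forall k, ~~ yfree md k -> vy md k = z (rshift N k).
  move=> k; rewrite YF /vy ffunE /= => H; apply: code3P.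
  case Ex: (emi (fixb (z (lshift N k)) (xl k) (xu k))) H => /= H.
    by move: H; rewrite negbK => /emiP.
  by case: (Hf k) => // /emiP; rewrite Ex.
exists (inl md); rewrite /= /Klin; split; first by move=> c; have := B c; lra.
split; first lra.
split.
  move=> k; rewrite XF; case Ex: (emi _) => //=; rewrite VX ?Ex //; lra.
split.
  move=> k; case Ey: (yfree md k) => //; rewrite VY ?Ey //; lra.
rewrite -Q /hq /qf; apply: rsum_ext => k.
case Ex: (xfree md k).
  have Ey : ~~ yfree md k by rewrite YF; move: Ex; rewrite XF => /negbTE ->.
  rewrite VY //; ring.
rewrite VX; first ring.
by move: Ex; rewrite XF => /negbFE.
Qed.

Lemma not_free_bd v l u : l <= v <= u -> ~ (l < v < u) -> v = l \/ v = u.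
Proof. move=> H1 H2; case: (Req_dec v l); [by left|move=> H3]; right; apply: NNPP => H4; apply: H2; lra. Qed.

Lemma baseB z i : SS z ->
  ~ fixb (z (lshift N i)) (xl i) (xu i) -> ~ fixb (z (rshift N i)) (yl i) (yu i) ->
  (forall k, k != i -> ~ (lo (lshift N k) < z (lshift N k) < hi (lshift N k)) /\ ~ (lo (rshift N k) < z (rshift N k) < hi (rshift N k))) ->
  exists p, Kpc p 1 z.
Proof.
move=> [Q B] Fx Fy Oth.
pose x := fun k => z (lshift N k); pose y := fun k => z (rshift N k).
pose bd : bnd := [ffun k => (if Req_dec_T (x k) (xu k) then true else false, if Req_dec_T (y k) (yu k) then true else false)].
have Bx : forall k, xl k <= x k <= xu k by move=> k; have := B (lshift N k); rewrite /lo /hi !vcatL.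
have By : forall k, yl k <= y k <= yu k by move=> k; have := B (rshift N k); rewrite /lo /hi !vcatR.
have EX : forall k, k != i -> Xb bd k = x k.
  move=> k ki; rewrite /Xb ffunE /=; case: Req_dec_T => [E|n] /=; first by rewrite E.
  have [H _] := Oth k ki; rewrite /lo /hi vcatL vcatL in H.
  by case: (not_free_bd (Bx k) H).
have EY : forall k, k != i -> Yb bd k = y k.
  move=> k ki; rewrite /Yb ffunE /=; case: Req_dec_T => [E|n] /=; first by rewrite E.
  have [_ H] := Oth k ki; rewrite /lo /hi vcatR vcatR in H.
  by case: (not_free_bd (By k) H).
pose es := ltb 0 (x i); pose et := ltb 0 (y i).
have xi0 : x i <> 0 by move=> H; apply: Fx; rewrite /fixb; right; right.
have yi0 : y i <> 0 by move=> H; apply: Fy; rewrite /fixb; right; right.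
pose s := sg es * x i; pose t := sg et * y i.
have sp : 0 < s by rewrite /s /es /sg /ltb; case: Rlt_dec => /= H; lra.
have tp : 0 < t by rewrite /t /et /sg /ltb; case: Rlt_dec => /= H; lra.
have Eq : a i * x i * y i + Cc i bd = 0.
  rewrite -Q /qf (rsum_D1 i); congr (_ + _); apply: rsum_ext => k.
  case: (eqVneq k i) => // ki; rewrite EX ?EY //.
have EK : kp i es et bd = s * t.
  rewrite /kp /s /t.
  have -> : - Cc i bd / a i = x i * y i by apply: (Rmult_eq_reg_l (a i)) => //; field_simplify; [lra | exact: ha].
  ring.
have sr := proj1 (s_range es i (x i)) (Bx i).
have tr := proj1 (t_range et i (y i)) (By i).
rewrite -/s in sr; rewrite -/t in tr.
have Al : al i es et bd <= s.
  apply: Rmax_lub; first lra.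
  rewrite EK; apply: div_le; first lra.
  nra.
have Be : s <= be i es et bd.
  rewrite /be; case: Rlt_dec => T1 /=; last lra.
  apply: Rmin_glb; first lra.
  rewrite EK; apply: le_div => //; nra.
have Ap : 0 < al i es et bd.
  have : 0 < kp i es et bd / t2 i et by rewrite EK; apply: Rdiv_lt_0_compat; nra.
  have := Rmax_r (s1 i es) (kp i es et bd / t2 i et); rewrite -/(al i es et bd); lra.
exists (inr (i, es, et, bd)); rewrite /= /Khyp.
case: Rlt_dec => Kp; last by exfalso; apply: Kp; rewrite EK; nra.
split; first by move=> c; have := B c; lra.
split; first lra.
split; first by move=> k; case: eqP => // /eqP ki; rewrite EX // /x; lra.
split; first by move=> k; case: eqP => // /eqP ki; rewrite EY // /y; lra.
rewrite /hs /ht -/(x i) -/(y i) -/s -/t EK.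
split; first lra. split; first lra.
split; first lra. split; first lra.
split; last nra.
have H1 : 0 <= (s - al i es et bd) * (be i es et bd - s) by apply: Rmult_le_pos; lra.
nra.
Qed.

Lemma Psi_comb z z1 z2 th : 0 <= th <= 1 -> (forall c, z c = th * z1 c + (1 - th) * z2 c) ->
  Psi Ks 1 z1 -> Psi Ks 1 z2 -> Psi Ks 1 z.
Proof.
move=> Hth E P1 P2.
have := Psi_add Ks_good (Psi_scal Ks_good (c := th) (proj1 Hth) P1) (Psi_scal Ks_good (c := 1 - th) ltac:(lra) P2).
apply: Psi_ext; [ring | by move=> c; rewrite E].
Qed.

Lemma free_of_notfix z k : (forall c, lo c <= z c <= hi c) ->
  ~ fixb (z (lshift N k)) (xl k) (xu k) -> freeb z (lshift N k).
Proof.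
move=> B H; apply/freebP; have := B (lshift N k); rewrite /lo /hi !vcatL => Hb.
split; apply: NNPP => K; apply: H; rewrite /fixb; lra.
Qed.
Lemma free_of_notfixy z k : (forall c, lo c <= z c <= hi c) ->
  ~ fixb (z (rshift N k)) (yl k) (yu k) -> freeb z (rshift N k).
Proof.
move=> B H; apply/freebP; have := B (rshift N k); rewrite /lo /hi !vcatR => Hb.
split; apply: NNPP => K; apply: H; rewrite /fixb; lra.
Qed.

Lemma SS_Psi z : SS z -> Psi Ks 1 z.
Proof.
suff : forall n z, (fc z < n)%N -> SS z -> Psi Ks 1 z by move=> H; apply: (H (fc z).+1).
elim=> [|n IH] {}z // Hn Sz.
have IH' : forall z', SS z' -> (fc z' < fc z)%N -> Psi Ks 1 z'.
  move=> z' S' C; apply: IH => //; rewrite ltnS in Hn; exact: leq_trans C Hn.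
case: (classic (exists i j, i != j /\ freeb z (lshift N i) /\ freeb z (lshift N j))) => [[i [j [ij [Fi Fj]]]]|Hx].
  have [z1 [z2 [th [Hth [E [S1 [S2 [C1 C2]]]]]]]] := xcase Sz ij Fi Fj.
  exact: Psi_comb Hth E (IH' _ S1 C1) (IH' _ S2 C2).
case: (classic (exists i j, i != j /\ freeb z (rshift N i) /\ freeb z (rshift N j))) => [[i [j [ij [Fi Fj]]]]|Hy].
  have [z1 [z2 [th [Hth [E [S1 [S2 [C1 C2]]]]]]]] := ycase Sz ij Fi Fj.
  exact: Psi_comb Hth E (IH' _ S1 C1) (IH' _ S2 C2).
have [p Kp] : exists p, Kpc p 1 z.
  case: (classic (forall k, fixb (z (lshift N k)) (xl k) (xu k) \/ fixb (z (rshift N k)) (yl k) (yu k))) => [H|H].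
    exact: baseA.
  have [i Hi] := not_all_ex_not _ _ H.
  have [Fx Fy] : ~ fixb (z (lshift N i)) (xl i) (xu i) /\ ~ fixb (z (rshift N i)) (yl i) (yu i) by tauto.
  apply: (baseB Sz Fx Fy) => k ki; split => /freebP Fk.
    by apply: Hx; exists k, i; split => //; split => //; apply: free_of_notfix => //; case: Sz.
  by apply: Hy; exists k, i; split => //; split => //; apply: free_of_notfixy => //; case: Sz.
exact: (@Psi_in _ Ks Ks_good (Kpc p) z (Ks_in p) Kp).
Qed.

Lemma conv_mono n (S S' : vec n -> Prop) z : (forall p, S p -> S' p) -> conv S z -> conv S' z.
Proof. move=> H [k [l [p [L [S1 [P E]]]]]]; exists k, l, p; split => //; split => //; split => // j; apply: H; exact: P. Qed.

Lemma main_socr : SOC_representable (conv (S_a a xl xu yl yu)).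
Proof.
apply: SOCr_SOC.
have HS : SOCr (fun v : vec (1 + (N + N)) => Psi Ks (hd1 v) (vr v)).
  apply: Psi_socr; apply: Ks_all => -[md|[[[i es] et] bd]] /=; [exact: Klin_socr | exact: Khyp_socr].
have HS1 : SOCr (fun z : vec (N + N) => Psi Ks (hd1 (vcat (fun _ : 'I_1 => 1) z)) (vr (vcat (fun _ : 'I_1 => 1) z))).
  apply: (SOCr_pre (P := fun v : vec (1 + (N + N)) => Psi Ks (hd1 v) (vr v))) => // j.
  case: (split_ordP j) => j' ->.
    by apply: (affine_ext (L := fun _ => 1)) => [x|]; [rewrite vcatL | exact: affine_const].
  by apply: (affine_ext (L := fun x => x j')) => [x|]; [rewrite vcatR | exact: affine_coord].
apply: SOCr_ext HS1 => z; rewrite /hd1 vcatL vr_vcat; split.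
  move=> P.
  have Kpts : forall K, List.In K Ks -> forall l w, K l w ->
      0 <= l /\ (l = 0 -> forall c, w c = 0) /\ (0 < l -> conv SS (fun c => w c / l)).
    apply: Ks_all => -[md|[[[i es] et] bd]] /=; [exact: Klin_pt | exact: Khyp_pt].
  have [_ [_ H]] := Psi_conv (conv_convex (S := SS)) Kpts P.
  have := H Rlt_0_1; have -> : (fun c => z c / 1) = z by apply: functional_extensionality => c; field.
  by apply: conv_mono => p /SS_Sa.
move=> C; apply: (conv_Psi Ks_good SS_Psi); move: C; by apply: conv_mono => p /SS_Sa.
Qed.

End Main.

Theorem theorem2 (N : nat) (a xl xu yl yu : vec N) :
  (0 < N)%N ->
  (forall i, a i <> 0) ->
  (forall i, xl i < xu i) ->
  (forall i, yl i < yu i) ->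
  SOC_representable (conv (S_a a xl xu yl yu)).
Proof.
move=> _ ha hx hy; apply: main_socr => //.
Qed.
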